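(* Let $\Delta\in\mathcal{H}_{\ge3}$ be a hypergraph on $[d]$. There exists a unique point-line configuration $N$ on $[d]$ that is minimal, with respect to the dependency order, among all point-line configurations on $[d]$ in which every $3$-element subset of every edge of $\Delta$ is dependent.
   Context: A hypergraph on $[d]$ is a collection of subsets of $[d]$ (edges) none properly contained in another; $\mathcal{H}_{\ge3}$ is the set of hypergraphs all of whose edges have size at least $3$. A point-line configuration on $[d]$ is a simple matroid (no circuits of size $1$ or $2$) of rank at most $3$; its lines are the maximal subsets of size at least $3$ and rank $2$, and a $3$-subset is dependent iff it is contained in a line. Dependency order: $N_1\le N_2$ iff every dependent set of $N_1$ is dependent in $N_2$. *)

(* Defs.v *)
From mathcomp Require Import all_boot.
Set Implicit Arguments. Unset Strict Implicit. Unset Printing Implicit Defensive.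

Definition hypergraph (d : nat) (D : {set {set 'I_d}}) : Prop :=
  forall e f : {set 'I_d}, e \in D -> f \in D -> ~ (e \proper f).

Definition hypergraph_ge3 (d : nat) (D : {set {set 'I_d}}) : Prop :=
  hypergraph D /\ forall e : {set 'I_d}, e \in D -> 3 <= #|e|.

Definition is_matroid (d : nat) (I : {set {set 'I_d}}) : Prop :=
  [/\ set0 \in I,
      (forall A B : {set 'I_d}, A \subset B -> B \in I -> A \in I) &
      (forall A B : {set 'I_d}, A \in I -> B \in I -> #|A| < #|B| ->
         exists2 x, x \in B :\: A & x |: A \in I)].

Definition dependent (d : nat) (I : {set {set 'I_d}}) (X : {set 'I_d}) : Prop :=
  X \notin I.

Definition circuit (d : nat) (I : {set {set 'I_d}}) (C : {set 'I_d}) : Prop :=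
  dependent I C /\ forall X : {set 'I_d}, X \proper C -> ~ dependent I X.

Definition simple_matroid (d : nat) (I : {set {set 'I_d}}) : Prop :=
  forall C : {set 'I_d}, circuit I C -> #|C| != 1 /\ #|C| != 2.

Definition rank_le3 (d : nat) (I : {set {set 'I_d}}) : Prop :=
  forall A : {set 'I_d}, A \in I -> #|A| <= 3.

Definition point_line_config (d : nat) (I : {set {set 'I_d}}) : Prop :=
  [/\ is_matroid I, simple_matroid I & rank_le3 I].

Definition dep_le (d : nat) (N1 N2 : {set {set 'I_d}}) : Prop :=
  forall X : {set 'I_d}, dependent N1 X -> dependent N2 X.

Definition realizes_edges (d : nat) (D : {set {set 'I_d}}) (N : {set {set 'I_d}}) : Prop :=
  forall e S : {set 'I_d}, e \in D -> S \subset e -> #|S| = 3 -> dependent N S.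

Definition minimal_config (d : nat) (D : {set {set 'I_d}}) (N : {set {set 'I_d}}) : Prop :=
  [/\ point_line_config N, realizes_edges D N &
      forall M : {set {set 'I_d}}, point_line_config M -> realizes_edges D M -> dep_le M N -> M = N].

(* Main.v *)
Require Import Defs.
From mathcomp Require Import all_boot.
From Stdlib Require Import ClassicalEpsilon.
Set Implicit Arguments. Unset Strict Implicit. Unset Printing Implicit Defensive.

Definition pb (P : Prop) : bool := if excluded_middle_informative P then true else false.
Lemma pbP (P : Prop) : reflect P (pb P).
Proof. rewrite /pb; case: excluded_middle_informative => h; by constructor. Qed.

Lemma small_indep d (I : {set {set 'I_d}}) : is_matroid I -> simple_matroid I ->
  forall X : {set 'I_d}, #|X| <= 2 -> X \in I.
Proof.
move=> [I0 Idown _] Hs X HX. apply/negPn/negP => XnI.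
pose P := fun Y : {set 'I_d} => (Y \subset X) && (Y \notin I).
have PX : P X by rewrite /P subxx XnI.
case: (arg_minnP (fun Y : {set 'I_d} => #|Y|) PX) => C /andP[CX CnI] Cmin.
have Hc : circuit I C.
  split => //. move=> Y YC YnI. have := Cmin Y.
  rewrite /P (subset_trans (proper_sub YC) CX) YnI /= => /(_ isT).
  by rewrite leqNgt proper_card.
have [h1 h2] := Hs C Hc.
have : #|C| <= 2 by apply: leq_trans (subset_leq_card CX) HX.
case Ec: #|C| h1 h2 => [|[|[|n]]] //= _ _ _.
move/eqP: Ec; rewrite cards_eq0 => /eqP C0. by rewrite C0 I0 in CnI.
Qed.

Definition cfgr d (D : {set {set 'I_d}}) (M : {set {set 'I_d}}) :=
  point_line_config M /\ realizes_edges D M.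

Lemma union_cfg d (D : {set {set 'I_d}}) (M1 M2 : {set {set 'I_d}}) : cfgr D M1 -> cfgr D M2 -> cfgr D (M1 :|: M2).
Proof.
move=> [[m1 s1 r1] R1] [[m2 s2 r2] R2].
have sm1 := small_indep m1 s1. have sm2 := small_indep m2 s2.
case: m1 => [z1 dn1 au1]; case: m2 => [z2 dn2 au2].
have mU : is_matroid (M1 :|: M2).
  split; first by rewrite inE z1.
  - move=> A B AB; rewrite !inE => /orP[h|h]; apply/orP; [left|right].
      exact: dn1 h. exact: dn2 h.
  - move=> A B; rewrite !inE => HA /orP[HB|HB] lt.
    + have HA1 : A \in M1.
        case/orP: HA => // HA; apply: sm1. have := r1 _ HB. move=> h.
        by rewrite -ltnS (leq_trans lt h).
      have [x xi xA] := au1 A B HA1 HB lt. by exists x => //; rewrite inE xA.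
    + have HA2 : A \in M2.
        case/orP: HA => // HA; apply: sm2. have := r2 _ HB. move=> h.
        by rewrite -ltnS (leq_trans lt h).
      have [x xi xA] := au2 A B HA2 HB lt. by exists x => //; rewrite inE xA orbT.
split; last first.
  move=> e S eD Se S3; rewrite /dependent inE negb_or.
  by have := R1 _ _ eD Se S3; have := R2 _ _ eD Se S3; rewrite /dependent => -> ->.
split => //.
- move=> C [CnI _]; move: CnI; rewrite /dependent inE => CnI.
  by split; apply/eqP => Cs; rewrite sm1 ?Cs in CnI.
- move=> A; rewrite inE => /orP[h|h]; [exact: r1 | exact: r2].
Qed.

Definition U2 d : {set {set 'I_d}} := [set X : {set 'I_d} | #|X| <= 2].

Lemma U2_cfg d (D : {set {set 'I_d}}) : cfgr D (U2 d).
Proof.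
split; last first.
  by move=> e S _ _ S3; rewrite /dependent inE S3.
split.
- split; first by rewrite inE cards0.
  + move=> A B AB; rewrite !inE => h; exact: leq_trans (subset_leq_card AB) h.
  + move=> A B; rewrite !inE => HA HB lt.
    have : B :\: A != set0.
      rewrite setD_eq0; apply/negP => BA; have := subset_leq_card BA.
      by rewrite leqNgt lt.
    case/set0Pn => x xBA; exists x => //; rewrite inE.
    rewrite cardsU1; case: (x \in A) => /=; first exact: leq_trans HA.
    by rewrite add1n; apply: leq_trans lt HB.
- move=> C [CnI _]; move: CnI; rewrite /dependent inE -ltnNge => h.
  by split; apply/eqP => Cs; rewrite Cs in h.
- move=> A; rewrite inE => h; exact: leq_trans h _.
Qed.

Theorem mainTheorem4 (d : nat) (D : {set {set 'I_d}}) :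
  hypergraph_ge3 D ->
  exists N : {set {set 'I_d}},
    minimal_config D N /\ forall N', minimal_config D N' -> N' = N.
Proof.
move=> _.
pose P := fun M : {set {set 'I_d}} => pb (cfgr D M).
have PU : P (U2 d) by apply/pbP; exact: U2_cfg.
case: (arg_maxnP (fun M : {set {set 'I_d}} => #|M|) PU) => N /pbP CN Nmax.
have maxI : forall M, cfgr D M -> M \subset N.
  move=> M CM.
  have CU := union_cfg CM CN.
  have h := Nmax _ (introT (pbP _) CU).
  have : N == M :|: N by rewrite eqEcard subsetUr; exact: h.
  by move/eqP => ->; rewrite subsetUl.
have minN : minimal_config D N.
  case: CN => c r; split => // M cM rM dle.
  apply/eqP; rewrite eqEsubset maxI ?andbT //.
  apply/subsetP => X XN; apply/negPn/negP => XM.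
  by have := dle X XM; rewrite /dependent XN.
exists N; split => // N' [c r mn].
have sub := maxI N' (conj c r).
case: minN => c0 r0 _.
symmetry; apply: mn => // X; rewrite /dependent => XN.
by apply/negP => XN'; move/negP: XN; apply; apply: (subsetP sub).
Qed.
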